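(* Let $A,q,\mu$ be as in the context and write $k=k_0(A,q,\mu)$. (i) Let $\phi,\tilde\phi\in\mathcal{C}^2(\mathbb{R}^N)$ be positive periodic functions satisfying $-\nabla\cdot(A\nabla\phi)-q\cdot\nabla\phi-\mu\phi=k\phi$ and $-\nabla\cdot(A\nabla\tilde\phi)+q\cdot\nabla\tilde\phi-(\mu-\nabla\cdot q)\tilde\phi=k\tilde\phi$, with $\int_C\phi\tilde\phi=1$. Then $\alpha=\sqrt{\phi\tilde\phi}$ and $\beta=\frac12\ln(\phi/\tilde\phi)$ belong to $\mathcal{C}^2(\mathbb{R}^N)$ and satisfy \[-\nabla\cdot (A\nabla\alpha) - \Big(\mu-\frac{\nabla\cdot q}{2}+\nabla\beta A\nabla\beta+q\cdot \nabla\beta\Big)\alpha=k\alpha,\qquad -\nabla\cdot \Big( \alpha^2 \big(A\nabla\beta+\frac{q}{2}\big)\Big)=0,\] with $\alpha>0$ periodic and $\beta$ periodic. (ii) Conversely, if $(\alpha,\beta)\in\mathcal{C}^2(\mathbb{R}^N)\times\mathcal{C}^2(\mathbb{R}^N)$ satisfy the two equations in (i) with $\alpha>0$ periodic and $\beta$ periodic, then $\phi=\alpha e^{\beta}$ and $\tilde\phi=\alpha e^{-\beta}$ are positive periodic functions satisfying the two eigenvalue equations in (i).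
   Context: Let $(\epsilon_i)$ be an orthonormal basis of $\mathbb{R}^N$ and $L_1,\dots,L_N>0$; a function is periodic if it is invariant under $x\mapsto x+L_i\epsilon_i$ for every $i$; $C=\prod_{i=1}^N(0,L_i)$ is the periodicity cell. Let $A$ be a periodic, symmetric matrix field of class $\mathcal{C}^1$, uniformly elliptic ($\gamma|\xi|^2\le\xi A(x)\xi\le\Gamma|\xi|^2$ for some $0<\gamma\le\Gamma$). Let $q$ be a periodic $\mathcal{C}^1$ vector field and $\mu$ a continuous periodic function. $k_0(A,q,\mu)$ is the periodic principal eigenvalue of $\phi\mapsto-\nabla\cdot(A\nabla\phi)-q\cdot\nabla\phi-\mu\phi$, i.e. the unique real $k$ for which there exists a periodic $\phi\in\mathcal{C}^2(\mathbb{R}^N)$, $\phi>0$, with $-\nabla\cdot(A\nabla\phi)-q\cdot\nabla\phi-\mu\phi=k\phi$. *)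

(* Defs.v *)
From HB Require Import structures.
From mathcomp Require Import all_boot all_order all_algebra.
From mathcomp Require Import all_classical all_reals all_analysis.
Set Implicit Arguments. Unset Strict Implicit. Unset Printing Implicit Defensive.
Import Order.TTheory GRing.Theory Num.Theory.
Import numFieldNormedType.Exports.
Local Open Scope classical_set_scope.
Local Open Scope ring_scope.

Section Defs.
Variables (R : realType) (N : nat).
Notation pt := 'rV[R]_N.

Definition ebase (i : 'I_N) : pt := delta_mx 0 i.
Definition partial (i : 'I_N) (f : pt -> R) (x : pt) : R := 'D_(ebase i) f x.

Definition C1 (f : pt -> R) : Prop :=
  continuous f /\
  forall i : 'I_N, (forall x, derivable f x (ebase i)) /\ continuous (partial i f).
Definition C2 (f : pt -> R) : Prop := C1 f /\ forall i : 'I_N, C1 (partial i f).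

Definition grad (f : pt -> R) (x : pt) : pt := \row_i partial i f x.
Definition div (F : pt -> pt) (x : pt) : R :=
  \sum_(i < N) partial i (fun y => F y 0 i) x.
Definition dotv (u v : pt) : R := \sum_(i < N) u 0 i * v 0 i.
Definition matv (M : 'M[R]_N) (u : pt) : pt := (M *m u^T)^T.
Definition Agrad (A : pt -> 'M[R]_N) (f : pt -> R) (x : pt) : pt :=
  matv (A x) (grad f x).

Definition cell_periodic {T : Type} (eps : 'I_N -> pt) (L : 'I_N -> R) (f : pt -> T) : Prop :=
  forall (x : pt) (i : 'I_N), f (x + L i *: eps i) = f x.

Definition orthonormal_fam (eps : 'I_N -> pt) : Prop :=
  forall i j : 'I_N, dotv (eps i) (eps j) = (i == j)%:R.

Definition Lop (A : pt -> 'M[R]_N) (q : pt -> pt) (mu : pt -> R) (phi : pt -> R)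
  (x : pt) : R :=
  - div (Agrad A phi) x - dotv (q x) (grad phi x) - mu x * phi x.

(* periodic principal eigenvalue: the (unique) k admitting a positive cell_periodic
   C^2 eigenfunction *)
Definition is_periodic_principal_eigenvalue (eps : 'I_N -> pt) (L : 'I_N -> R)
  (A : pt -> 'M[R]_N) (q : pt -> pt) (mu : pt -> R) (k : R) : Prop :=
  exists phi : pt -> R, [/\ C2 phi, cell_periodic eps L phi, (forall x, 0 < phi x) &
    forall x, Lop A q mu phi x = k * phi x].

Definition k0 (eps : 'I_N -> pt) (L : 'I_N -> R)
  (A : pt -> 'M[R]_N) (q : pt -> pt) (mu : pt -> R) : R :=
  get [set k | is_periodic_principal_eigenvalue eps L A q mu k].

(* Integral over the periodicity cell C = { sum_i t_i eps_i : t_i in (0, L_i) },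
   computed as an iterated Lebesgue integral in the coordinates t_i
   (orthonormal_fam change of variables has Jacobian 1). *)
Definition Lnat (L : 'I_N -> R) (n : nat) : R :=
  if insub n is Some i then L i else 0.

Fixpoint box_int (n : nat) (Ln : nat -> R) (g : (nat -> R) -> R) : R :=
  match n with
  | 0 => g (fun _ => 0)
  | n'.+1 => Rintegral (@lebesgue_measure R) `]0, Ln n'[
       (fun t => box_int n' Ln (fun s => g (fun j => if j == n' then t else s j)))
  end.

Definition cell_integral (eps : 'I_N -> pt) (L : 'I_N -> R) (f : pt -> R) : R :=
  box_int N (Lnat L) (fun s => f (\sum_(i < N) s i *: eps i)).

End Defs.

(* Main.v *)
Require Import Defs.
From HB Require Import structures.
From mathcomp Require Import all_boot all_order all_algebra.
From mathcomp Require Import all_classical all_reals all_analysis.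
From mathcomp Require Import ring lra.
Import Order.TTheory GRing.Theory Num.Theory.
Import numFieldNormedType.Exports.
Local Open Scope classical_set_scope.
Local Open Scope ring_scope.

Set Implicit Arguments.
Section S.
Variables (R : realType) (N : nat).
Notation pt := 'rV[R]_N.
Implicit Types (i j : 'I_N) (x : pt) (f g : pt -> R).

Lemma derive_dir (f : pt -> R) x v :
  'D_v f x = 'D_1 (fun h : R => f (h *: v + x)) 0.
Proof.
rewrite /derive; congr lim.
have -> : (fun h : R => h^-1 *: ((f \o shift x) (h *: v) - f x)) =
  (fun h : R => h^-1 *: (((fun h0 : R => f (h0 *: v + x)) \o shift 0) (h *: 1) - f (0 *: v + x))).
  by apply: funext => h /=; rewrite scale0r add0r addr0 [_%:A]mulr1.
by [].
Qed.

Lemma comp_der {g : R -> R} {f : pt -> R} {x v} :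
  derivable g (f x) 1 -> derivable f x v ->
  derivable (fun y => g (f y)) x v /\
  'D_v (fun y => g (f y)) x = 'D_1 g (f x) * 'D_v f x.
Proof.
move=> dg df.
have dF : derivable (fun h : R => f (h *: v + x)) 0 1 := (derivable1P _ _ _).1 df.
have dg' : derivable g ((fun h : R => f (h *: v + x)) 0) 1 by rewrite /= scale0r add0r.
split.
  apply/derivable1P.
  change (derivable (g \o (fun h : R => f (h *: v + x))) 0 1).
  apply/derivable1_diffP; apply: differentiable_comp; exact/derivable1_diffP.
rewrite !derive_dir.
have := derive1_comp dF dg'; rewrite !derive1E /= scale0r add0r => <-.
by [].
Qed.
Definition Dv (f : pt -> R) := forall i x, derivable f x (ebase R i).

Lemma dvD f g : Dv f -> Dv g -> Dv (fun y => f y + g y).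
Proof. by move=> df dg i x; exact: (derivableD (df i x) (dg i x)). Qed.
Lemma pD f g i x : Dv f -> Dv g ->
  partial i (fun y => f y + g y) x = partial i f x + partial i g x.
Proof. by move=> df dg; exact: (deriveD (df i x) (dg i x)). Qed.

Lemma dvM f g : Dv f -> Dv g -> Dv (fun y => f y * g y).
Proof. by move=> df dg i x; exact: (derivableM (df i x) (dg i x)). Qed.
Lemma pM f g i x : Dv f -> Dv g ->
  partial i (fun y => f y * g y) x = f x * partial i g x + g x * partial i f x.
Proof. by move=> df dg; exact: (deriveM (df i x) (dg i x)). Qed.

Lemma dvC (c : R) : Dv (fun _ => c).
Proof. by move=> i x; exact: derivable_cst. Qed.
Lemma pC (c : R) i x : partial i (fun _ => c) x = 0.
Proof. exact: derive_cst. Qed.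

Lemma dvCM (c : R) f : Dv f -> Dv (fun y => c * f y).
Proof. by move=> df; apply: dvM => //; exact: dvC. Qed.
Lemma pCM (c : R) f i x : Dv f -> partial i (fun y => c * f y) x = c * partial i f x.
Proof. by move=> df; rewrite pM // ?pC ?mulr0 ?addr0 //; exact: dvC. Qed.

Lemma dvsum n (F : 'I_n -> pt -> R) : (forall k : 'I_n, Dv (F k)) ->
  Dv (fun y => \sum_(k < n) F k y).
Proof.
move=> dF i x.
have := derivable_sum (fun k => dF k i x).
by rewrite (_ : \sum_(k < n) F k = fun y => \sum_(k < n) F k y) //; apply: funext => y; rewrite fct_sumE.
Qed.
Lemma psum n (F : 'I_n -> pt -> R) i x : (forall k : 'I_n, Dv (F k)) ->
  partial i (fun y => \sum_(k < n) F k y) x = \sum_(k < n) partial i (F k) x.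
Proof.
move=> dF.
have := derive_sum (fun k => dF k i x).
by rewrite (_ : \sum_(k < n) F k = fun y => \sum_(k < n) F k y) //; apply: funext => y; rewrite fct_sumE.
Qed.

Lemma der_expR (y : R) : derivable (@expR R) y 1.
Proof. exact: (@derivable_expR R y). Qed.
Lemma der_ln {y : R} : 0 < y -> derivable (@ln R) y 1.
Proof. move=> yp; exact: (@ex_derive _ _ _ _ _ _ _ (is_derive1_ln yp)). Qed.

Lemma Dexp (y : R) : 'D_1 (@expR R) y = expR y.
Proof. exact: (@derive_val _ _ _ _ _ _ _ (is_derive_expR y)). Qed.
Lemma Dln {y : R} : 0 < y -> 'D_1 (@ln R) y = y^-1.
Proof. move=> yp; exact: (@derive_val _ _ _ _ _ _ _ (is_derive1_ln yp)). Qed.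

Lemma dvexp f : Dv f -> Dv (fun y => expR (f y)).
Proof. by move=> df i x; case: (comp_der (der_expR (f x)) (df i x)). Qed.
Lemma pexp f i x : Dv f -> partial i (fun y => expR (f y)) x = expR (f x) * partial i f x.
Proof.
move=> df; case: (comp_der (der_expR (f x)) (df i x)) => _.
by rewrite /partial => ->; rewrite Dexp.
Qed.

Lemma dvln f : (forall y, 0 < f y) -> Dv f -> Dv (fun y => ln (f y)).
Proof.
move=> fp df i x; case: (comp_der (der_ln (fp x)) (df i x)) => //.
Qed.
Lemma pln f i x : (forall y, 0 < f y) -> Dv f ->
  partial i (fun y => ln (f y)) x = (f x)^-1 * partial i f x.
Proof.
move=> fp df; case: (comp_der (der_ln (fp x)) (df i x)) => _.
by rewrite /partial => ->; rewrite (Dln (fp x)).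
Qed.

Lemma dvV f : (forall y, 0 < f y) -> Dv f -> Dv (fun y => (f y)^-1).
Proof. by move=> fp df i x; apply: derivableV => //; rewrite gt_eqF. Qed.
Lemma pV f i x : (forall y, 0 < f y) -> Dv f ->
  partial i (fun y => (f y)^-1) x = - ((f x)^-1 * (f x)^-1) * partial i f x.
Proof.
move=> fp df; rewrite /partial deriveV ?gt_eqF //.
by rewrite -invfM -expr2.
Qed.


Lemma contD f g : continuous f -> continuous g -> continuous (fun y => f y + g y).
Proof. by move=> cf cg x; exact: (continuousD (cf x) (cg x)). Qed.
Lemma contM f g : continuous f -> continuous g -> continuous (fun y => f y * g y).
Proof. by move=> cf cg x; exact: (continuousM (cf x) (cg x)). Qed.
Lemma contC (c : R) : continuous (fun _ : pt => c).
Proof. by move=> x; exact: cst_continuous. Qed.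
Lemma contN f : continuous f -> continuous (fun y => - f y).
Proof.
move=> cf; rewrite (_ : (fun y => - f y) = fun y => (-1) * f y).
  exact: contM (@contC (-1)) cf.
by apply: funext => y; rewrite mulN1r.
Qed.
Lemma contexp f : continuous f -> continuous (fun y => expR (f y)).
Proof. by move=> cf x; exact: (continuous_comp (cf x) (@continuous_expR R _)). Qed.
Lemma contV f : (forall y, 0 < f y) -> continuous f -> continuous (fun y => (f y)^-1).
Proof. by move=> fp cf x; apply: continuousV; [rewrite gt_eqF | exact: cf]. Qed.

Lemma C1_Dv f : C1 f -> Dv f.
Proof. by rewrite /C1 => -[_ H] i; case: (H i). Qed.
Lemma C1_c f : C1 f -> continuous f.
Proof. by rewrite /C1 => -[]. Qed.
Lemma C1_pc f i : C1 f -> continuous (partial i f).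
Proof. by rewrite /C1 => -[_ H]; case: (H i). Qed.

Lemma C1D f g : C1 f -> C1 g -> C1 (fun y => f y + g y).
Proof.
move=> cf cg; split; first exact: contD (C1_c cf) (C1_c cg).
move=> i; split; first exact: (dvD (C1_Dv cf) (C1_Dv cg) i).
rewrite (_ : partial i _ = fun x => partial i f x + partial i g x).
  exact: contD (C1_pc i cf) (C1_pc i cg).
by apply: funext => x; rewrite pD //; [exact: C1_Dv cf | exact: C1_Dv cg].
Qed.

Lemma C1M f g : C1 f -> C1 g -> C1 (fun y => f y * g y).
Proof.
move=> cf cg; split; first exact: contM (C1_c cf) (C1_c cg).
move=> i; split; first exact: (dvM (C1_Dv cf) (C1_Dv cg) i).
rewrite (_ : partial i _ = fun x => f x * partial i g x + g x * partial i f x).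
  by apply: contD; apply: contM; [exact: C1_c cf | exact: C1_pc i cg | exact: C1_c cg | exact: C1_pc i cf].
by apply: funext => x; rewrite pM //; [exact: C1_Dv cf | exact: C1_Dv cg].
Qed.

Lemma C1C (c : R) : C1 (fun _ : pt => c).
Proof.
split; first exact: contC.
move=> i; split; first exact: (dvC c i).
rewrite (_ : partial i _ = fun _ => 0); first exact: contC.
by apply: funext => x; rewrite pC.
Qed.

Lemma C1CM (c : R) f : C1 f -> C1 (fun y => c * f y).
Proof. by move=> cf; apply: C1M => //; exact: C1C. Qed.

Lemma C1exp f : C1 f -> C1 (fun y => expR (f y)).
Proof.
move=> cf; split; first exact: contexp (C1_c cf).
move=> i; split; first exact: (dvexp (C1_Dv cf) i).
rewrite (_ : partial i _ = fun x => expR (f x) * partial i f x).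
  by apply: contM; [apply: contexp; exact: C1_c cf | exact: C1_pc i cf].
by apply: funext => x; rewrite pexp //; exact: C1_Dv cf.
Qed.

Lemma C1V f : (forall y, 0 < f y) -> C1 f -> C1 (fun y => (f y)^-1).
Proof.
move=> fp cf; split; first exact: contV (C1_c cf).
move=> i; split; first exact: (dvV fp (C1_Dv cf) i).
rewrite (_ : partial i _ = fun x => - ((f x)^-1 * (f x)^-1) * partial i f x).
  apply: contM; last exact: C1_pc i cf.
  by apply: contN; apply: contM; exact: contV (C1_c cf).
by apply: funext => x; rewrite pV //; exact: C1_Dv cf.
Qed.

Lemma C2_C1 f : C2 f -> C1 f.
Proof. by rewrite /C2 => -[]. Qed.
Lemma C2_p f i : C2 f -> C1 (partial i f).
Proof. by rewrite /C2 => -[_ H]; exact: H. Qed.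
Lemma C2_Dv f : C2 f -> Dv f.
Proof. by move=> /C2_C1 /C1_Dv. Qed.
Lemma C2_Dvp f i : C2 f -> Dv (partial i f).
Proof. by move=> /(C2_p i) /C1_Dv. Qed.

Lemma C2D f g : C2 f -> C2 g -> C2 (fun y => f y + g y).
Proof.
move=> cf cg; split; first exact: C1D (C2_C1 cf) (C2_C1 cg).
move=> i; rewrite (_ : partial i _ = fun x => partial i f x + partial i g x).
  exact: C1D (C2_p i cf) (C2_p i cg).
by apply: funext => x; rewrite pD //; [exact: C2_Dv cf | exact: C2_Dv cg].
Qed.

Lemma C2M f g : C2 f -> C2 g -> C2 (fun y => f y * g y).
Proof.
move=> cf cg; split; first exact: C1M (C2_C1 cf) (C2_C1 cg).
move=> i; rewrite (_ : partial i _ = fun x => f x * partial i g x + g x * partial i f x).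
  by apply: C1D; apply: C1M; [exact: C2_C1 cf | exact: C2_p i cg | exact: C2_C1 cg | exact: C2_p i cf].
by apply: funext => x; rewrite pM //; [exact: C2_Dv cf | exact: C2_Dv cg].
Qed.

Lemma C2CM (c : R) f : C2 f -> C2 (fun y => c * f y).
Proof.
move=> cf; split; first exact: C1CM (C2_C1 cf).
move=> i; rewrite (_ : partial i _ = fun x => c * partial i f x).
  exact: C1CM (C2_p i cf).
by apply: funext => x; rewrite pCM //; exact: C2_Dv cf.
Qed.

Lemma C2exp f : C2 f -> C2 (fun y => expR (f y)).
Proof.
move=> cf; split; first exact: C1exp (C2_C1 cf).
move=> i; rewrite (_ : partial i _ = fun x => expR (f x) * partial i f x).
  by apply: C1M; [apply: C1exp; exact: C2_C1 cf | exact: C2_p i cf].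
by apply: funext => x; rewrite pexp //; exact: C2_Dv cf.
Qed.

Lemma C2ln f : (forall y, 0 < f y) -> C2 f -> C2 (fun y => ln (f y)).
Proof.
move=> fp cf; split.
  split; first by move=> x; exact: (continuous_comp (C1_c (C2_C1 cf) x) (continuous_ln (fp x))).
  move=> i; split; first exact: (dvln fp (C2_Dv cf) i).
  rewrite (_ : partial i _ = fun x => (f x)^-1 * partial i f x).
    by apply: contM; [apply: contV => //; exact: C1_c (C2_C1 cf) | exact: C1_pc i (C2_C1 cf)].
  by apply: funext => x; rewrite pln //; exact: C2_Dv cf.
move=> i; rewrite (_ : partial i _ = fun x => (f x)^-1 * partial i f x).
  by apply: C1M; [apply: C1V => //; exact: C2_C1 cf | exact: C2_p i cf].
by apply: funext => x; rewrite pln //; exact: C2_Dv cf.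
Qed.


Definition DV (V : pt -> pt) := forall i, Dv (fun y => V y 0 i).

Lemma gradE f x i : grad f x 0 i = partial i f x.
Proof. by rewrite /grad mxE. Qed.

Lemma matvE (M : 'M[R]_N) (u : pt) i : matv M u 0 i = \sum_(j < N) M i j * u 0 j.
Proof. by rewrite /matv !mxE; apply: eq_bigr => j _; rewrite mxE. Qed.

Lemma AgradE (A : pt -> 'M[R]_N) f y i :
  Agrad A f y 0 i = \sum_(j < N) A y i j * partial j f y.
Proof. by rewrite /Agrad matvE; apply: eq_bigr => j _; rewrite gradE. Qed.

Lemma matvD (M : 'M[R]_N) (u v : pt) : matv M (u + v) = matv M u + matv M v.
Proof.
apply/rowP => i; rewrite matvE [in RHS]mxE !matvE -big_split; apply: eq_bigr => j _.
by rewrite mxE mulrDr.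
Qed.

Lemma matvZ (M : 'M[R]_N) (a : R) (u : pt) : matv M (a *: u) = a *: matv M u.
Proof.
apply/rowP => i; rewrite matvE [in RHS]mxE matvE mulr_sumr; apply: eq_bigr => j _.
by rewrite mxE mulrCA.
Qed.

Lemma dotvDl (u v w : pt) : dotv (u + v) w = dotv u w + dotv v w.
Proof. by rewrite /dotv -big_split; apply: eq_bigr => j _; rewrite mxE mulrDl. Qed.
Lemma dotvDr (u v w : pt) : dotv w (u + v) = dotv w u + dotv w v.
Proof. by rewrite /dotv -big_split; apply: eq_bigr => j _; rewrite mxE mulrDr. Qed.
Lemma dotvZl (a : R) (u w : pt) : dotv (a *: u) w = a * dotv u w.
Proof. by rewrite /dotv mulr_sumr; apply: eq_bigr => j _; rewrite mxE mulrA. Qed.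
Lemma dotvZr (a : R) (u w : pt) : dotv w (a *: u) = a * dotv w u.
Proof. by rewrite /dotv mulr_sumr; apply: eq_bigr => j _; rewrite mxE mulrCA. Qed.
Lemma dotvC (u w : pt) : dotv u w = dotv w u.
Proof. by rewrite /dotv; apply: eq_bigr => j _; rewrite mulrC. Qed.
Lemma dotv0l (w : pt) : dotv 0 w = 0.
Proof. by rewrite /dotv big1 // => j _; rewrite mxE mul0r. Qed.

Lemma dotv_sym (M : 'M[R]_N) (u v : pt) : M^T = M ->
  dotv u (matv M v) = dotv v (matv M u).
Proof.
move=> MT; rewrite /dotv.
under eq_bigr do rewrite matvE mulr_sumr.
under [RHS]eq_bigr do rewrite matvE mulr_sumr.
rewrite exchange_big /=; apply: eq_bigr => j _; apply: eq_bigr => i _.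
have Hs : M j i = M i j by rewrite -[in LHS]MT mxE.
by rewrite Hs; ring.
Qed.

Lemma comp_add (V W : pt -> pt) i :
  (fun y => (V y + W y) 0 i) = (fun y => V y 0 i + W y 0 i).
Proof. by apply: funext => y; rewrite mxE. Qed.
Lemma comp_scale f (V : pt -> pt) i :
  (fun y => (f y *: V y) 0 i) = (fun y => f y * V y 0 i).
Proof. by apply: funext => y; rewrite mxE. Qed.

Lemma DVD V W : DV V -> DV W -> DV (fun y => V y + W y).
Proof. by move=> dV dW i; rewrite comp_add; exact: dvD. Qed.
Lemma DVZ f V : Dv f -> DV V -> DV (fun y => f y *: V y).
Proof. by move=> df dV i; rewrite comp_scale; exact: dvM. Qed.
Lemma DVZC (c : R) V : DV V -> DV (fun y => c *: V y).
Proof. by move=> dV; apply: (@DVZ (fun _ => c)) => //; exact: dvC. Qed.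

Lemma DV_Agrad (A : pt -> 'M[R]_N) f :
  (forall i j, Dv (fun y => A y i j)) -> (forall j, Dv (partial j f)) ->
  DV (Agrad A f).
Proof.
move=> dA df i.
rewrite (_ : (fun y => Agrad A f y 0 i) = fun y => \sum_(j < N) A y i j * partial j f y).
  by apply: dvsum => j; apply: dvM.
by apply: funext => y; rewrite AgradE.
Qed.

Lemma div_add V W x : DV V -> DV W -> div (fun y => V y + W y) x = div V x + div W x.
Proof.
move=> dV dW; rewrite /div -big_split; apply: eq_bigr => i _.
have dVi := dV i; have dWi := dW i.
by rewrite comp_add pD.
Qed.

Lemma div_scale f V x : Dv f -> DV V ->
  div (fun y => f y *: V y) x = f x * div V x + dotv (grad f x) (V x).
Proof.
move=> df dV; rewrite /div /dotv mulr_sumr -big_split; apply: eq_bigr => i _.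
have dVi := dV i.
rewrite comp_scale pM // /grad mxE /=; ring.
Qed.

Lemma grad_mul f g x : Dv f -> Dv g ->
  grad (fun y => f y * g y) x = f x *: grad g x + g x *: grad f x.
Proof. by move=> df dg; apply/rowP => i; rewrite !mxE pM. Qed.
Lemma grad_exp f x : Dv f -> grad (fun y => expR (f y)) x = expR (f x) *: grad f x.
Proof. by move=> df; apply/rowP => i; rewrite !mxE pexp. Qed.
Lemma grad_CM (c : R) f x : Dv f -> grad (fun y => c * f y) x = c *: grad f x.
Proof. by move=> df; apply/rowP => i; rewrite !mxE pCM. Qed.
Lemma grad_C (c : R) x : grad (fun _ => c) x = 0.
Proof. by apply/rowP => i; rewrite !mxE pC. Qed.

Lemma div_C (c : R) V x : DV V -> div (fun y => c *: V y) x = c * div V x.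
Proof.
move=> dV; rewrite (@div_scale (fun _ => c)) ?grad_C ?dotv0l ?addr0 //; exact: dvC.
Qed.


Lemma key (A : pt -> 'M[R]_N) (q : pt -> pt) (mu : pt -> R) (k c : R)
  (alpha beta : pt -> R) x :
  (c = 1 \/ c = -1) ->
  (forall y, (A y)^T = A y) ->
  (forall i j, Dv (fun y => A y i j)) ->
  DV q ->
  Dv alpha -> Dv beta -> (forall j, Dv (partial j alpha)) -> (forall j, Dv (partial j beta)) ->
  let E := fun y => expR (c * beta y) in
  let phi := fun y => alpha y * E y in
  alpha x * (- div (Agrad A phi) x - c * dotv (q x) (grad phi x)
     - (mu x - (1 - c) / 2 * div q x) * phi x - k * phi x)
  = E x * (alpha x * (- div (Agrad A alpha) x
          - (mu x - div q x / 2 + dotv (grad beta x) (Agrad A beta x)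
             + dotv (q x) (grad beta x)) * alpha x - k * alpha x)
       - c * div (fun y => (alpha y ^+ 2) *: (Agrad A beta y + 2^-1 *: q y)) x).
Proof.
move=> hc AT dA dq da db dda ddb E phi.
have dcb : Dv (fun y => c * beta y) := dvCM c db.
have dE : Dv E := dvexp dcb.
have gE : forall y, grad E y = (c * E y) *: grad beta y.
  by move=> y; rewrite /E grad_exp // grad_CM // scalerA mulrC.
have gphi : forall y, grad phi y = alpha y *: grad E y + E y *: grad alpha y.
  by move=> y; exact: grad_mul.
have Aphi : Agrad A phi =
    fun y => (alpha y * (c * E y)) *: Agrad A beta y + E y *: Agrad A alpha y.
  by apply: funext => y; rewrite /Agrad gphi gE matvD !matvZ scalerA.
have dAa : DV (Agrad A alpha) := @DV_Agrad A alpha dA dda.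
have dAb : DV (Agrad A beta) := @DV_Agrad A beta dA ddb.
have dcE : Dv (fun y => c * E y) := dvCM c dE.
have dae : Dv (fun y => alpha y * (c * E y)) := dvM da dcE.
have da2 : Dv (fun y => alpha y ^+ 2).
  by rewrite (_ : (fun y => _) = fun y => alpha y * alpha y);
    [exact: dvM | apply: funext => y; rewrite expr2].
have ga2 : grad (fun y => alpha y ^+ 2) x = (2 * alpha x) *: grad alpha x.
  rewrite (_ : (fun y => _) = fun y => alpha y * alpha y);
    last by apply: funext => y; rewrite expr2.
  by rewrite grad_mul // -scalerDl mulr2n mulrDl mul1r.
have dqh : DV (fun y => 2^-1 *: q y) := DVZC (2^-1) dq.
have dBq : DV (fun y => Agrad A beta y + 2^-1 *: q y) := DVD dAb dqh.
have D1 : div (Agrad A phi) x = div (fun y => (alpha y * (c * E y)) *: Agrad A beta y) x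
    + div (fun y => E y *: Agrad A alpha y) x.
  by rewrite Aphi; exact: (div_add x (DVZ dae dAb) (DVZ dE dAa)).
have D2 : div (fun y => (alpha y * (c * E y)) *: Agrad A beta y) x
  = (alpha x * (c * E x)) * div (Agrad A beta) x
    + dotv (grad (fun y => alpha y * (c * E y)) x) (Agrad A beta x) := div_scale x dae dAb.
have D3 : div (fun y => E y *: Agrad A alpha y) x
  = E x * div (Agrad A alpha) x + dotv (grad E x) (Agrad A alpha x) := div_scale x dE dAa.
have D4 : div (fun y => alpha y ^+ 2 *: (Agrad A beta y + 2^-1 *: q y)) x
  = alpha x ^+ 2 * div (fun y => Agrad A beta y + 2^-1 *: q y) x
    + dotv (grad (fun y => alpha y ^+ 2) x) (Agrad A beta x + 2^-1 *: q x) := div_scale x da2 dBq.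
have D5 : div (fun y => Agrad A beta y + 2^-1 *: q y) x
  = div (Agrad A beta) x + div (fun y => 2^-1 *: q y) x := div_add x dAb dqh.
have D6 : div (fun y => 2^-1 *: q y) x = 2^-1 * div q x := div_C (2^-1) x dq.
have G1 : grad (fun y => alpha y * (c * E y)) x
  = alpha x *: grad (fun y => c * E y) x + (c * E x) *: grad alpha x := grad_mul x da dcE.
have G2 : grad (fun y => c * E y) x = c *: grad E x := grad_CM c x dE.
rewrite D1 D2 D3 D4 D5 D6 ga2 G1 G2 gphi !gE.
rewrite !(dotvDl, dotvDr, dotvZl, dotvZr).
have Hsym : dotv (grad alpha x) (Agrad A beta x) = dotv (grad beta x) (Agrad A alpha x).
  exact: dotv_sym.
rewrite Hsym (dotvC (grad alpha x) (q x)).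
rewrite /phi.
move: (div (Agrad A alpha) x) (div (Agrad A beta) x) (dotv (grad beta x) (Agrad A beta x)) (dotv (grad beta x) (Agrad A alpha x)) (dotv (q x) (grad beta x)) (dotv (q x) (grad alpha x)) (div q x) (mu x) (alpha x) (E x) => Da Db S2 S1 T2 T1 dqq m a e.
by case: hc => ->; field.
Qed.

Lemma key2 (A : pt -> 'M[R]_N) (q : pt -> pt) (mu : pt -> R) (k c : R)
  (alpha beta phi : pt -> R) x :
  (c = 1 \/ c = -1) ->
  (forall y, (A y)^T = A y) ->
  (forall i j, Dv (fun y => A y i j)) ->
  DV q ->
  Dv alpha -> Dv beta -> (forall j, Dv (partial j alpha)) -> (forall j, Dv (partial j beta)) ->
  phi = (fun y => alpha y * expR (c * beta y)) ->
  alpha x * (- div (Agrad A phi) x - c * dotv (q x) (grad phi x)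
     - (mu x - (1 - c) / 2 * div q x) * phi x - k * phi x)
  = expR (c * beta x) * (alpha x * (- div (Agrad A alpha) x
          - (mu x - div q x / 2 + dotv (grad beta x) (Agrad A beta x)
             + dotv (q x) (grad beta x)) * alpha x - k * alpha x)
       - c * div (fun y => (alpha y ^+ 2) *: (Agrad A beta y + 2^-1 *: q y)) x).
Proof.
move=> hc AT dA dq da db dda ddb ->.
exact: (@key A q mu k c alpha beta x hc AT dA dq da db dda ddb).
Qed.

Lemma C2N f : C2 f -> C2 (fun y => - f y).
Proof.
move=> cf; rewrite (_ : (fun y => - f y) = fun y => (-1) * f y).
  exact: C2CM.
by apply: funext => y; rewrite mulN1r.
Qed.

Lemma conv1 (a b m d f kk : R) : a - b - m * f = kk * f ->
  a - 1 * b - (m - (1 - 1) / 2 * d) * f - kk * f = 0.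
Proof. by move=> h; rewrite -h; ring. Qed.
Lemma conv2 (a b m d f kk : R) : a + b - (m - d) * f = kk * f ->
  a - (-1) * b - (m - (1 - -1) / 2 * d) * f - kk * f = 0.
Proof. by move=> h; rewrite -h; field. Qed.
Lemma conv1' (a b m d f kk : R) :
  a - 1 * b - (m - (1 - 1) / 2 * d) * f - kk * f = 0 -> a - b - m * f = kk * f.
Proof. by move=> h; apply/eqP; rewrite -subr_eq0; apply/eqP; rewrite -h; ring. Qed.
Lemma conv2' (a b m d f kk : R) :
  a - (-1) * b - (m - (1 - -1) / 2 * d) * f - kk * f = 0 -> a + b - (m - d) * f = kk * f.
Proof. by move=> h; apply/eqP; rewrite -subr_eq0; apply/eqP; rewrite -h; field. Qed.


Lemma solvePQ (e1 e2 a P Q : R) : 0 < e1 -> 0 < e2 -> a != 0 ->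
  e1 * (a * P - 1 * Q) = 0 -> e2 * (a * P - (-1) * Q) = 0 -> P = 0 /\ Q = 0.
Proof.
move=> h1 h2 ha /eqP; rewrite mulf_eq0 gt_eqF //= => /eqP E1.
move/eqP; rewrite mulf_eq0 gt_eqF //= => /eqP E2.
have Q0 : Q = 0.
  have : 2 * Q = (a * P - (-1) * Q) - (a * P - 1 * Q) by ring.
  by rewrite E1 E2 subr0 => /eqP; rewrite mulf_eq0 pnatr_eq0 /= => /eqP.
split=> //; move: E1; rewrite Q0 mulr0 subr0 => /eqP; rewrite mulf_eq0 (negbTE ha) /=.
by move/eqP.
Qed.

End S.
Unset Implicit Arguments.

Theorem proposition2p6 (R : realType) (N : nat)
  (eps : 'I_N -> 'rV[R]_N) (L : 'I_N -> R)
  (A : 'rV[R]_N -> 'M[R]_N) (q : 'rV[R]_N -> 'rV[R]_N) (mu : 'rV[R]_N -> R) :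
  orthonormal_fam eps ->
  (forall i, 0 < L i) ->
  (* A : cell_periodic, symmetric, C^1, uniformly elliptic *)
  cell_periodic eps L A ->
  (forall x, (A x)^T = A x) ->
  (forall i j : 'I_N, C1 (fun x => A x i j)) ->
  (exists gamma Gamma : R, [/\ 0 < gamma, gamma <= Gamma &
     forall x xi, gamma * dotv xi xi <= dotv xi (matv (A x) xi) <= Gamma * dotv xi xi]) ->
  (* q : cell_periodic, C^1 *)
  cell_periodic eps L q ->
  (forall i : 'I_N, C1 (fun x => q x 0 i)) ->
  (* mu : cell_periodic, continuous *)
  cell_periodic eps L mu ->
  continuous mu ->
  let k := k0 eps L A q mu in
  (* (i) *)
  (forall phi phit : 'rV[R]_N -> R,
     C2 phi -> C2 phit ->
     (forall x, 0 < phi x) -> (forall x, 0 < phit x) ->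
     cell_periodic eps L phi -> cell_periodic eps L phit ->
     (forall x, - div (Agrad A phi) x - dotv (q x) (grad phi x) - mu x * phi x
                = k * phi x) ->
     (forall x, - div (Agrad A phit) x + dotv (q x) (grad phit x)
                - (mu x - div q x) * phit x = k * phit x) ->
     cell_integral eps L (fun x => phi x * phit x) = 1 ->
     let alpha := fun x => Num.sqrt (phi x * phit x) in
     let beta := fun x => 2^-1 * ln (phi x / phit x) in
     [/\ C2 alpha /\ C2 beta,
       (forall x, - div (Agrad A alpha) x
          - (mu x - div q x / 2 + dotv (grad beta x) (Agrad A beta x)
             + dotv (q x) (grad beta x)) * alpha x = k * alpha x),
       (forall x, - div (fun y => (alpha y ^+ 2) *: (Agrad A beta y + 2^-1 *: q y)) x = 0),
       (forall x, 0 < alpha x) &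
       cell_periodic eps L alpha /\ cell_periodic eps L beta]) /\
  (* (ii) *)
  (forall alpha beta : 'rV[R]_N -> R,
     C2 alpha -> C2 beta ->
     (forall x, 0 < alpha x) -> cell_periodic eps L alpha -> cell_periodic eps L beta ->
     (forall x, - div (Agrad A alpha) x
          - (mu x - div q x / 2 + dotv (grad beta x) (Agrad A beta x)
             + dotv (q x) (grad beta x)) * alpha x = k * alpha x) ->
     (forall x, - div (fun y => (alpha y ^+ 2) *: (Agrad A beta y + 2^-1 *: q y)) x = 0) ->
     let phi := fun x => alpha x * expR (beta x) in
     let phit := fun x => alpha x * expR (- beta x) in
     [/\ C2 phi /\ C2 phit,
       (forall x, 0 < phi x) /\ (forall x, 0 < phit x),
       cell_periodic eps L phi /\ cell_periodic eps L phit,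
       (forall x, - div (Agrad A phi) x - dotv (q x) (grad phi x) - mu x * phi x
                = k * phi x) &
       (forall x, - div (Agrad A phit) x + dotv (q x) (grad phit x)
                - (mu x - div q x) * phit x = k * phit x)]).
Proof.
move=> orth Lpos Aper AT AC1 ell qper qC1 muper mucont k.
have dA : forall i j, Dv R (fun y => A y i j) := fun i j => C1_Dv (AC1 i j).
have dq : DV R q := fun i => C1_Dv (qC1 i).
split.
- move=> phi phit C2p C2pt pp ppt perp perpt eq1 eq2 _ alpha beta.
  have Ha : alpha = fun y => expR (2^-1 * (ln (phi y) + ln (phit y))).
    apply: funext => y; rewrite /alpha -powR12_sqrt; last exact/ltW/mulr_gt0.
    by rewrite /powR gt_eqF ?mulr_gt0 // lnM // posrE.
  have Hb : beta = fun y => 2^-1 * (ln (phi y) + - ln (phit y)).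
    by apply: funext => y; rewrite /beta ln_div // posrE.
  have C2a : C2 alpha.
    by rewrite Ha; apply/C2exp/C2CM/C2D; apply: C2ln.
  have C2b : C2 beta.
    by rewrite Hb; apply/C2CM/C2D; [apply: C2ln | apply: C2N; apply: C2ln].
  have apos : forall y, 0 < alpha y by move=> y; rewrite /alpha sqrtr_gt0 mulr_gt0.
  have Hphi : phi = fun y => alpha y * expR (1 * beta y).
    apply: funext => y; rewrite Ha Hb mul1r -expRD.
    have -> : 2^-1 * (ln (phi y) + ln (phit y)) + 2^-1 * (ln (phi y) + - ln (phit y))
      = ln (phi y) by field.
    by rewrite lnK // posrE.
  have Hphit : phit = fun y => alpha y * expR (-1 * beta y).
    apply: funext => y; rewrite Ha Hb -expRD.
    have -> : 2^-1 * (ln (phi y) + ln (phit y)) + -1 * (2^-1 * (ln (phi y) + - ln (phit y)))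
      = ln (phit y) by field.
    by rewrite lnK // posrE.
  have da : Dv R alpha := C2_Dv C2a.
  have db : Dv R beta := C2_Dv C2b.
  have dda : forall j, Dv R (partial j alpha) := fun j => C2_Dvp j C2a.
  have ddb : forall j, Dv R (partial j beta) := fun j => C2_Dvp j C2b.
  have PQ : forall x,
    - div (Agrad A alpha) x
          - (mu x - div q x / 2 + dotv (grad beta x) (Agrad A beta x)
             + dotv (q x) (grad beta x)) * alpha x - k * alpha x = 0 /\
    div (fun y => (alpha y ^+ 2) *: (Agrad A beta y + 2^-1 *: q y)) x = 0.
    move=> x.
    have K1 := @key2 R N A q mu k 1 alpha beta phi x (or_introl erefl) AT dA dq da db dda ddb Hphi.
    have K2 := @key2 R N A q mu k (-1) alpha beta phit x (or_intror erefl) AT dA dq da db dda ddb Hphit.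
    have r1 := @conv1 R _ _ _ (div q x) _ _ (eq1 x).
    have r2 := @conv2 R _ _ _ (div q x) _ _ (eq2 x).
    rewrite r1 mulr0 in K1; rewrite r2 mulr0 in K2.
    exact: (@solvePQ R _ _ _ _ _ (expR_gt0 _) (expR_gt0 _) (negbT (gt_eqF (apos x))) (esym K1) (esym K2)).
  split.
  + by split.
  + move=> x; have [P0 _] := PQ x.
    by apply/eqP; rewrite -subr_eq0; apply/eqP.
  + by move=> x; have [_ Q0] := PQ x; rewrite Q0 oppr0.
  + exact: apos.
  + by split => x i; rewrite /alpha /beta perp perpt.
- move=> alpha beta C2a C2b apos aper bper eqa eqQ phi phit.
  have Hphi : phi = fun y => alpha y * expR (1 * beta y).
    by apply: funext => y; rewrite mul1r.
  have Hphit : phit = fun y => alpha y * expR (-1 * beta y).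
    by apply: funext => y; rewrite mulN1r.
  have da : Dv R alpha := C2_Dv C2a.
  have db : Dv R beta := C2_Dv C2b.
  have dda : forall j, Dv R (partial j alpha) := fun j => C2_Dvp j C2a.
  have ddb : forall j, Dv R (partial j beta) := fun j => C2_Dvp j C2b.
  have P0 : forall x, - div (Agrad A alpha) x
          - (mu x - div q x / 2 + dotv (grad beta x) (Agrad A beta x)
             + dotv (q x) (grad beta x)) * alpha x - k * alpha x = 0.
    by move=> x; apply/eqP; rewrite subr_eq0; apply/eqP; exact: eqa.
  have Q0 : forall x, div (fun y => (alpha y ^+ 2) *: (Agrad A beta y + 2^-1 *: q y)) x = 0.
    by move=> x; apply/eqP; rewrite -oppr_eq0; apply/eqP; exact: eqQ.
  split.
  + split; first exact: (C2M C2a (C2exp C2b)).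
    exact: (C2M C2a (C2exp (C2N C2b))).
  + by split => y; apply: mulr_gt0 => //; exact: expR_gt0.
  + by split => x i; rewrite /phi /phit aper bper.
  + move=> x.
    have K1 := @key2 R N A q mu k 1 alpha beta phi x (or_introl erefl) AT dA dq da db dda ddb Hphi.
    rewrite P0 Q0 !mulr0 subr0 mulr0 in K1.
    move/eqP: K1; rewrite mulf_eq0 gt_eqF //= => /eqP.
    exact: conv1'.
  + move=> x.
    have K2 := @key2 R N A q mu k (-1) alpha beta phit x (or_intror erefl) AT dA dq da db dda ddb Hphit.
    rewrite P0 Q0 !mulr0 subr0 mulr0 in K2.
    move/eqP: K2; rewrite mulf_eq0 gt_eqF //= => /eqP.
    exact: conv2'.
Qed.
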